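(* Let $(a_i)$ be a real sequence and $t=(t_i)$ an increasing real sequence with the same index set. Then $t\in T_a$ if and only if $$\sum_{i=1}^n\big(a_{\lfloor p_i\rfloor_t}-a_{\lfloor q_i\rfloor_t}\big)\le\sum_{i=1}^n\left(\{q_i\}_t\frac{\Delta a_{\lfloor q_i\rfloor_t}}{\Delta t_{\lfloor q_i\rfloor_t}}-\{p_i\}_t\frac{\Delta a_{\lfloor p_i\rfloor_t}}{\Delta t_{\lfloor p_i\rfloor_t}}\right)$$ holds for all $n\ge2$ and all $(p_1,\dots,p_n),(q_1,\dots,q_n)\in I_t^n$ with $(p_1,\dots,p_n)\prec(q_1,\dots,q_n)$ (a term with $\{q\}_t=0$ is interpreted as $0$, even when $\lfloor q\rfloor_t$ is the last index).
   Context: For a real sequence $(x_i)$, $\Delta x_i=x_{i+1}-x_i$. ''Increasing'' means strictly increasing. $T_a$ is the set of increasing real sequences $t=(t_i)$ with the same index set as $a$ such that $(\Delta a_i/\Delta t_i)$ is non-decreasing. For increasing $t$: $I_t=[t_1,t_N]$ if $t=(t_1,\dots,t_N)$ is finite, and $I_t=[t_1,\lim_{i\to\infty}t_i)$ if $t$ is infinite. For $q\in I_t$, $\lfloor q\rfloor_t$ is the index $i$ of the largest $t_i$ with $t_i\le q$, and $\{q\}_t=q-t_{\lfloor q\rfloor_t}$. For $x,y\in\mathbb{R}^n$, with components in decreasing order $x_{[1]}\ge\dots\ge x_{[n]}$, $y_{[1]}\ge\dots\ge y_{[n]}$, $x\prec y$ means $\sum_{i=1}^k x_{[i]}\le\sum_{i=1}^k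 y_{[i]}$ for $k=1,\dots,n-1$ and $\sum_{i=1}^n x_i=\sum_{i=1}^n y_i$. *)

(* Defs.v *)
From HB Require Import structures.
From mathcomp Require Import all_boot all_order all_algebra.
From mathcomp Require Import boolp classical_sets reals.
Set Implicit Arguments. Unset Strict Implicit. Unset Printing Implicit Defensive.
Import Order.TTheory GRing.Theory Num.Theory.
Local Open Scope ring_scope.

(* Index set of a sequence: [Some N] = {0,...,N-1} (finite sequence of length N),
   [None] = all of nat (infinite sequence). *)
Definition idxset := option nat.

Definition in_dom (D : idxset) (i : nat) : Prop :=
  match D with Some N => (i < N)%N | None => True end.

Definition nonempty_dom (D : idxset) : Prop :=
  match D with Some N => (0 < N)%N | None => True end.

Section Defs.
Variable R : realType.

Definition increasing (D : idxset) (t : nat -> R) : Prop :=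
  forall i j, in_dom D i -> in_dom D j -> (i < j)%N -> t i < t j.

Definition slope (a t : nat -> R) (i : nat) : R :=
  (a i.+1 - a i) / (t i.+1 - t i).

(* T_a : increasing t (same index set D as a) with (Delta a_i / Delta t_i)
   non-decreasing; that sequence is indexed by the i with i, i+1 in D. *)
Definition in_Ta (D : idxset) (a t : nat -> R) : Prop :=
  increasing D t /\
  forall i j, (i <= j)%N -> in_dom D j.+1 -> slope a t i <= slope a t j.

(* I_t = [t_0, t_{N-1}] (finite) or [t_0, lim t_i) (infinite; for increasing t,
   q < lim t_i iff q < t_i for some i). *)
Definition in_It (D : idxset) (t : nat -> R) (q : R) : Prop :=
  match D with
  | Some N => t 0%N <= q /\ q <= t N.-1
  | None => t 0%N <= q /\ exists i, q < t i
  end.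

Definition floor_t (D : idxset) (t : nat -> R) (q : R) : nat :=
  xget 0%N (fun i => in_dom D i /\ t i <= q /\
                     forall j, in_dom D j -> t j <= q -> (j <= i)%N).

Definition frac_t (D : idxset) (t : nat -> R) (q : R) : R :=
  q - t (floor_t D t q).

Definition term (D : idxset) (a t : nat -> R) (q : R) : R :=
  if frac_t D t q == 0 then 0
  else frac_t D t q * slope a t (floor_t D t q).

Definition dsort n (x : 'I_n -> R) : seq R :=
  sort (fun u v : R => v <= u) [seq x i | i <- enum 'I_n].

Definition majorized n (x y : 'I_n -> R) : Prop :=
  (forall k, (1 <= k <= n.-1)%N ->
     \sum_(0 <= i < k) (dsort x)`_i <= \sum_(0 <= i < k) (dsort y)`_i) /\
  \sum_(i < n) x i = \sum_(i < n) y i.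

End Defs.

(* Main.v *)
Require Import Defs.
From HB Require Import structures.
From mathcomp Require Import all_boot all_order all_algebra.
From mathcomp Require Import boolp classical_sets reals.
From mathcomp Require Import ring lra zify.
Import Order.TTheory GRing.Theory Num.Theory.
Local Open Scope ring_scope.

Section Aux.
Variable R : realType.
Variable D : idxset.
Variables a t : nat -> R.
Hypothesis ht : increasing D t.
Hypothesis hD : nonempty_dom D.

Lemma dom_down i j : (i <= j)%N -> in_dom D j -> in_dom D i.
Proof. case: D => //= N ij jN; exact: leq_ltn_trans ij jN. Qed.

Lemma t_le i j : in_dom D j -> (i <= j)%N -> t i <= t j.
Proof.
move=> dj; rewrite leq_eqVlt => /orP[/eqP->//|ij].
by apply/ltW/ht => //; apply: dom_down dj; apply: ltnW.
Qed.

Definition Pfl (x : R) (j : nat) : Prop :=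
  in_dom D j /\ t j <= x /\ forall k, in_dom D k -> t k <= x -> (k <= j)%N.

Lemma max_exists (Q : nat -> Prop) K :
  (exists k, Q k /\ (k < K)%N) -> (forall k, Q k -> (k < K)%N) ->
  exists j, Q j /\ forall k, Q k -> (k <= j)%N.
Proof.
elim: K => [[k [_ //]]|K IH [k [Qk kK]] HK].
case: (pselect (Q K)) => QK.
  by exists K; split=> // k' /HK.
have HK' : forall k, Q k -> (k < K)%N.
  move=> k' Qk'; have := HK _ Qk'; rewrite ltnS leq_eqVlt => /orP[/eqP E|//].
  by rewrite E in Qk'.
by apply: IH => //; exists k; split=> //; apply: HK'.
Qed.

Lemma floor_spec x : in_It D t x -> Pfl x (floor_t D t x).
Proof.
move=> hx; rewrite /floor_t.
apply: (@xgetPex _ 0%N (fun i => in_dom D i /\ t i <= x /\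
                     forall j, in_dom D j -> t j <= x -> (j <= i)%N)).
have [K HK] : exists K, forall k, in_dom D k -> t k <= x -> (k < K)%N.
  move: hx; case E: D => [N|] /= hx.
    by exists N.
  case: hx => _ [m xm]; exists m => k _ tk; rewrite ltnNge; apply/negP => mk.
  have tmk : t m <= t k by apply: t_le; rewrite // E.
  by have := lt_le_trans xm (le_trans tmk tk); rewrite ltxx.
have [j [[dj tj] Hj]] : exists j, (in_dom D j /\ t j <= x) /\ forall k, in_dom D k /\ t k <= x -> (j >= k)%N.
  apply: (@max_exists _ K); last by move=> k [] dk /(HK _ dk).
  have d0 : in_dom D 0 by move: hD; case: (D).
  have t0 : t 0%N <= x by case: (D) hx => [N|] /= [].
  by exists 0%N; split; [split|apply: HK].
exists j; split=> //; split=> // k dk tk; exact: Hj.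
Qed.

Lemma floor_eq x j : in_It D t x -> Pfl x j -> floor_t D t x = j.
Proof.
move=> hx [dj [tj Hj]]; have [di [ti Hi]] := floor_spec _ hx.
by apply/eqP; rewrite eqn_leq (Hj _ di ti) (Hi _ dj tj).
Qed.

Lemma term_eq x : term D a t x = frac_t D t x * slope a t (floor_t D t x).
Proof. by rewrite /term; case: eqP => [->|_]; rewrite ?mul0r. Qed.

Definition g j x := a j + (x - t j) * slope a t j.

Lemma f_eq x : a (floor_t D t x) + term D a t x = g (floor_t D t x) x.
Proof. by rewrite term_eq /g /frac_t. Qed.

Lemma g_succ j x : in_dom D j.+1 ->
  g j.+1 x = g j x + (slope a t j.+1 - slope a t j) * (x - t j.+1).
Proof.
move=> dj; have tlt : t j < t j.+1 by apply: ht => //; apply: dom_down dj.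
have nz : t j.+1 - t j != 0 by rewrite subr_eq0 gt_eqF.
have E : a j.+1 = a j + (t j.+1 - t j) * slope a t j.
  by rewrite /slope mulrC divfK // addrC subrK.
rewrite /g E; ring.
Qed.

Lemma g_sum m x : in_dom D m ->
  g m x = g 0 x + \sum_(k < m) (slope a t k.+1 - slope a t k) * (x - t k.+1).
Proof.
elim: m => [|m IH] dm; first by rewrite big_ord0 addr0.
rewrite g_succ // IH ?big_ord_recr /= ?addrA //; exact: dom_down dm.
Qed.

Definition pos (u : R) := Num.max u 0.

Definition H M x := g 0 x +
  \sum_(k < M.-1) (slope a t k.+1 - slope a t k) * pos (x - t k.+1).

Lemma H_eq M x : in_dom D M -> in_It D t x -> x <= t M ->
  a (floor_t D t x) + term D a t x = H M x.
Proof.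
move=> dM hx xM; rewrite f_eq; set j := floor_t D t x.
have [dj [tj Hj]] := floor_spec _ hx.
have jM : (j <= M)%N.
  rewrite leqNgt; apply/negP => Mj.
  have := ht M j dM dj Mj => /(le_lt_trans xM) /(le_lt_trans tj); by rewrite ltxx.
pose j' := if j == M then M.-1 else j.
have gj : g j x = g j' x.
  rewrite /j'; case: eqP => // jeq; have [M0|Mpos] := posnP M; first by rewrite jeq M0.
  have xe : x = t M by apply/le_anti; rewrite xM -jeq tj.
  by rewrite jeq -{1}(prednK Mpos) g_succ ?prednK //= xe subrr mulr0 addr0.
have j'M : (j' <= M.-1)%N.
  rewrite /j'; case: eqP => // /eqP jM'.
  by rewrite -ltnS (leq_trans _ (leqSpred M)) // ltn_neqAle jM' jM.
rewrite gj g_sum; last first.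
  by apply: dom_down (dj); rewrite /j'; case: eqP => [e|_] //; rewrite -/j e leq_pred.
rewrite /H (big_ord_widen _ (fun k : nat => (slope a t k.+1 - slope a t k) * (x - t k.+1)) j'M) big_mkcond /=; congr (_ + _); apply: eq_bigr => k _.
have dk1 : in_dom D k.+1.
  apply: dom_down dM; exact: leq_trans (ltn_ord k) (leq_pred M).
case: ifP => kj.
  have : t k.+1 <= x.
    apply: le_trans tj; apply: t_le => //; apply: leq_trans kj _.
    by rewrite /j'; case: eqP => [e|_] //; rewrite -/j e leq_pred.
  by rewrite /pos -subr_ge0 => h; rewrite max_l.
have : x <= t k.+1.
  move: kj; rewrite /j'; case: eqP => [jeq|_] kj.
    by move: (ltn_ord k); rewrite ltnNge; move/negbT: kj; rewrite -ltnNge ltnS => ->.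
  rewrite leNgt; apply/negP => xlt; have := Hj _ dk1 (ltW xlt).
  by rewrite -/j kj.
by rewrite /pos -subr_le0 => h; rewrite max_r ?mulr0.
Qed.
End Aux.

Section Hinge.
Variable R : realType.

Lemma sum_dsort n (p : 'I_n -> R) (F : R -> R) :
  \sum_(i < n) F (p i) = \sum_(u <- dsort p) F u.
Proof.
rewrite /dsort (perm_big [seq p i | i <- enum 'I_n]); last by rewrite perm_sort.
by rewrite big_map big_enum.
Qed.

Lemma size_dsort n (p : 'I_n -> R) : size (dsort p) = n.
Proof. by rewrite size_sort size_map size_enum_ord. Qed.

Lemma sorted_dsort n (p : 'I_n -> R) : sorted (fun u v : R => v <= u) (dsort p).
Proof. by apply: sort_sorted => u v; apply: le_total. Qed.

Lemma sorted_pos (c : R) s : sorted (fun u v : R => v <= u) s ->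
  exists k, (k <= size s)%N /\
   \sum_(u <- s) Num.max (u - c) 0 = \sum_(0 <= i < k) (s`_i - c).
Proof.
elim: s => [|u s IH] /= hs; first by exists 0%N; split; rewrite // big_nil big_geq.
have hs' : sorted (fun u v : R => v <= u) s by move: hs; case: (s) => //= v s' /andP[].
have [k [ks E]] := IH hs'.
case: (ltP c u) => cu.
  exists k.+1; split=> //; rewrite big_cons E big_nat_recl //= max_l //.
  by rewrite subr_ge0 ltW.
exists 0%N; split=> //; rewrite big_geq // big_cons max_r ?subr_le0 // add0r.
have := order_path_min (fun y x z (h1 : y <= x) (h2 : z <= y) => le_trans h2 h1) hs.
move=> /allP al; rewrite big1_seq // => v /andP[_ vs]; apply/max_r.
by rewrite subr_le0; apply: le_trans cu; apply: al.
Qed.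

Lemma hinge n (p q : 'I_n -> R) c : majorized p q ->
  \sum_(i < n) Num.max (p i - c) 0 <= \sum_(i < n) Num.max (q i - c) 0.
Proof.
move=> [Hk Hs]; pose F := (fun u : R => Num.max (u - c) 0); rewrite (sum_dsort _ p F) (sum_dsort _ q F).
have [k [ks ->]] := sorted_pos c _ (sorted_dsort _ p); rewrite size_dsort in ks.
have step : \sum_(0 <= i < k) ((dsort p)`_i - c) <= \sum_(0 <= i < k) ((dsort q)`_i - c).
  rewrite !sumrB lerD2r.
  have [->|k0] := posnP k; first by rewrite !big_geq.
  move: ks; rewrite leq_eqVlt => /orP[/eqP ->|kn].
    have E (u : 'I_n -> R) : \sum_(0 <= i < n) (dsort u)`_i = \sum_(i < n) u i.
      by rewrite (sum_dsort _ u id) [RHS](big_nth 0) size_dsort.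
    by rewrite !E Hs.
  by apply: Hk; rewrite k0 /= -ltnS prednK //; case: (n) kn.
apply: (le_trans step); rewrite [X in _ <= X](big_nth 0) size_dsort.
have kn : (k <= n)%N by [].
rewrite (big_cat_nat (leq0n k) ks) /= -[X in X <= _]addr0.
apply: lerD; last by apply: sumr_ge0 => i _; rewrite le_max lexx orbT.
by apply: ler_sum => i _; rewrite le_max lexx.
Qed.
End Hinge.

Lemma forward (R : realType) (D : idxset) (hD : nonempty_dom D)
  (a t : nat -> R) (ht : increasing D t) : in_Ta D a t ->
  (forall (n : nat), (2 <= n)%N ->
   forall p q : 'I_n -> R,
     (forall i, in_It D t (p i)) -> (forall i, in_It D t (q i)) ->
     majorized p q ->
     \sum_(i < n) (a (floor_t D t (p i)) - a (floor_t D t (q i)))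
       <= \sum_(i < n) (term D a t (q i) - term D a t (p i))).
Proof.
move=> [_ hs] n _ p q Hp Hq maj.
have [M [dM [pM qM]]] : exists M, in_dom D M /\ (forall i, p i <= t M) /\ (forall i, q i <= t M).
  move: Hp Hq; case ED: D hD => [N|] /= hN Hp Hq.
    exists N.-1; split; first by rewrite prednK.
    by split=> i; [case: (Hp i)|case: (Hq i)].
  have ex i : exists k, p i < t k /\ q i < t k.
    have [_ [k1 h1]] := Hp i; have [_ [k2 h2]] := Hq i.
    exists (maxn k1 k2); split.
      by apply: (lt_le_trans h1); apply: (t_le _ _ _ ht); rewrite ?ED ?leq_maxl.
    by apply: (lt_le_trans h2); apply: (t_le _ _ _ ht); rewrite ?ED ?leq_maxr.
  have [K HK] := choice ex.
  exists (\max_(i < n) K i); split => //.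
  have le i : t (K i) <= t (\max_(i < n) K i).
    by apply: (t_le _ _ _ ht); rewrite ?ED // (leq_bigmax i).
  by split=> i; have [h1 h2] := HK i; apply: ltW; apply: lt_le_trans (le i).
have E i : (term D a t (q i) - term D a t (p i)) -
           (a (floor_t D t (p i)) - a (floor_t D t (q i)))
         = H R a t M (q i) - H R a t M (p i).
  rewrite -(H_eq _ _ _ _ ht hD _ _ dM (Hq i) (qM i)) -(H_eq _ _ _ _ ht hD _ _ dM (Hp i) (pM i)); ring.
rewrite -subr_ge0 -sumrB (eq_bigr _ (fun i _ => E i)) /H.
have -> : \sum_(i < n) (g R a t 0 (q i) + \sum_(k < M.-1) (slope a t k.+1 - slope a t k) * pos R (q i - t k.+1)
   - (g R a t 0 (p i) + \sum_(k < M.-1) (slope a t k.+1 - slope a t k) * pos R (p i - t k.+1)))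
   = \sum_(i < n) (q i - p i) * slope a t 0 +
     \sum_(i < n) \sum_(k < M.-1) (slope a t k.+1 - slope a t k) *
        (pos R (q i - t k.+1) - pos R (p i - t k.+1)).
  rewrite -big_split /=; apply: eq_bigr => i _.
  have -> : \sum_(k < M.-1) (slope a t k.+1 - slope a t k) * (pos R (q i - t k.+1) - pos R (p i - t k.+1))
    = \sum_(k < M.-1) (slope a t k.+1 - slope a t k) * pos R (q i - t k.+1) -
      \sum_(k < M.-1) (slope a t k.+1 - slope a t k) * pos R (p i - t k.+1).
    by rewrite -sumrB; apply: eq_bigr => k _; rewrite mulrBr.
  rewrite /g; ring.
rewrite -mulr_suml sumrB (proj2 maj) subrr mul0r add0r exchange_big /=.
apply: sumr_ge0 => k _; rewrite -mulr_sumr; apply: mulr_ge0.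
  rewrite subr_ge0; apply: hs => //; apply: dom_down dM.
  have kM := ltn_ord k; move: kM; set m := nat_of_ord k; move: m => m; lia.
rewrite sumrB subr_ge0; exact: hinge.
Qed.

Lemma sum2 (R : realType) (F : 'I_2 -> R) : \sum_(i < 2) F i = F ord0 + F ord_max.
Proof. by rewrite big_ord_recr big_ord1; congr (F _ + _); apply/val_inj. Qed.

Section Back.
Variable R : realType.
Variable D : idxset.
Variables a t : nat -> R.
Hypothesis ht : increasing D t.
Hypothesis hD : nonempty_dom D.

Lemma floor_between x j : in_It D t x -> in_dom D j.+1 -> t j <= x -> x < t j.+1 ->
  floor_t D t x = j.
Proof.
move=> hx dj tj xj; apply: (floor_eq _ _ _ ht hD) => //; split; first exact: dom_down dj.
split=> // k dk tk; rewrite leqNgt; apply/negP => jk.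
have := t_le _ _ _ ht _ _ dk jk => h.
by have := lt_le_trans xj (le_trans h tk); rewrite ltxx.
Qed.

Lemma in_It_of x j : t 0%N <= x -> in_dom D j -> x < t j -> in_It D t x.
Proof.
move=> t0 dj xj; move: dj; case ED: D => [N|] /= dj; last by split=> //; exists j.
split=> //; apply: ltW; apply: (lt_le_trans xj); apply: (t_le _ _ _ ht); rewrite ?ED /=.
  by rewrite prednK //; case: (N) dj.
by rewrite -ltnS prednK //; case: (N) dj.
Qed.

Lemma a_succ j : in_dom D j.+1 -> a j.+1 = a j + (t j.+1 - t j) * slope a t j.
Proof.
move=> dj; have tlt : t j < t j.+1 by apply: ht => //; apply: dom_down dj.
have nz : t j.+1 - t j != 0 by rewrite subr_eq0 gt_eqF.
by rewrite /slope mulrC divfK // addrC subrK.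
Qed.

Lemma step_slope k :
  (forall (n : nat), (2 <= n)%N ->
   forall p q : 'I_n -> R,
     (forall i, in_It D t (p i)) -> (forall i, in_It D t (q i)) ->
     majorized p q ->
     \sum_(i < n) (a (floor_t D t (p i)) - a (floor_t D t (q i)))
       <= \sum_(i < n) (term D a t (q i) - term D a t (p i))) ->
  in_dom D k.+2 -> slope a t k <= slope a t k.+1.
Proof.
move=> Hyp dk2.
have dk1 : in_dom D k.+1 := @dom_down _ _ _ (leqnSn k.+1) dk2.
have dk0 : in_dom D k := @dom_down _ _ _ (ltnW (leqnSn k.+1)) dk2.
set c := t k.+1.
have g1 : t k < c by apply: ht.
have g2 : c < t k.+2 by apply: ht.
set m := Num.min (c - t k) (t k.+2 - c).
have m1 : m <= c - t k by rewrite /m ge_min lexx.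
have m2 : m <= t k.+2 - c by rewrite /m ge_min lexx orbT.
have m0 : 0 < m by rewrite /m lt_min !subr_gt0 g1 g2.
set h := m / 2.
have h0 : 0 < h by rewrite /h divr_gt0.
have hm : h < m by rewrite /h ltr_pdivrMr // mulr_natr mulr2n ltrDr.
have t0k : t 0%N <= t k by apply: (t_le _ _ _ ht).
pose p := fun _ : 'I_2 => c.
pose q := fun i : 'I_2 => if nat_of_ord i == 0%N then c - h else c + h.
have Hp : forall i, in_It D t (p i).
  move=> i; apply: (in_It_of _ (k.+2)) => //; rewrite /p; apply: (le_trans t0k); exact: ltW.
have Hq : forall i, in_It D t (q i).
  move=> i; apply: (in_It_of _ (k.+2)) => //; rewrite /q; case: ifP => _; lra.
have maj : majorized p q.
  split; last by rewrite !sum2 /p /q /=; ring.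
  move=> k'; rewrite /= => /andP[k1 k2]; have -> : k' = 1%N by apply/eqP; rewrite eqn_leq k1 k2.
  rewrite !big_nat1.
  have -> : (dsort p)`_0 = c.
    have : (dsort p)`_0 \in dsort p by rewrite mem_nth // size_dsort.
    by rewrite /dsort mem_sort => /mapP [i _ ->].
  have S := sum_dsort _ _ q id; have Sz := size_dsort _ _ q; have So := sorted_dsort _ _ q.
  move: S Sz So; case: (dsort q) => [|y0 [|y1 [|? ?]]] //= S _ /andP[y10 _].
  move: S; rewrite sum2 /q /= big_cons big_seq1 /= => S; lra.
have := Hyp 2%N erefl p q Hp Hq maj; rewrite !sum2 /p /q /=.
rewrite !term_eq /frac_t.
rewrite (floor_between c k.+1) ?lexx //; last exact: (Hp ord0).
have F0 : floor_t D t (c - h) = k.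
  apply: floor_between => //; [exact: (Hq ord0)|lra|rewrite -/c; lra].
have F1 : floor_t D t (c + h) = k.+1.
  apply: floor_between => //; [exact: (Hq ord_max)|rewrite -/c; lra|lra].
rewrite F0 F1.
rewrite (a_succ _ dk1) /c; move=> H.
have : 0 <= h * (slope a t k.+1 - slope a t k) by lra.
by rewrite pmulr_rge0 // subr_ge0.
Qed.
End Back.

Theorem theorem4p8 (R : realType) (D : idxset)
  (hD : nonempty_dom D)
  (a t : nat -> R) (ht : increasing D t) :
  in_Ta D a t <->
  (forall (n : nat), (2 <= n)%N ->
   forall p q : 'I_n -> R,
     (forall i, in_It D t (p i)) -> (forall i, in_It D t (q i)) ->
     majorized p q ->
     \sum_(i < n) (a (floor_t D t (p i)) - a (floor_t D t (q i)))
       <= \sum_(i < n) (term D a t (q i) - term D a t (p i))).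
Proof.
split; first exact: forward.
move=> Hyp; split => // i j; elim: j => [|j IH] ij dj1.
  by move: ij; rewrite leqn0 => /eqP ->.
move: ij; rewrite leq_eqVlt => /orP[/eqP -> //|ij].
apply: le_trans (IH ij (@dom_down _ _ _ (leqnSn _) dj1)) _.
exact: (@step_slope R D a t ht hD j Hyp dj1).
Qed.
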